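(* Let $f$ be a holomorphic quadratic self-map of $\mathbb{P}^2$ preserving the line $\ell=\{z_1=0\}$, written $[z_1:z_2:z_3]\mapsto[z_1\widehat L:z_2\widehat L-\widehat P:z_3\widehat L-\widehat Q]$ with $\widehat L$ linear and $\widehat P,\widehat Q$ quadratic homogeneous forms, and set $L(x,y)=\widehat L(1,x,y)$, $P(x,y)=\widehat P(1,x,y)$, $Q(x,y)=\widehat Q(1,x,y)$. Suppose $f$ has exactly four fixed points $p_1,\dots,p_4$ off $\ell$, all non-degenerate, and let $t_i,d_i$ be the trace and determinant of $\mathbf{I}-Df|_{p_i}$. Then $p_1,\dots,p_4$ are common zeros of $P,Q$ with $L(p_i)\ne0$, the Jacobian matrix of $(P,Q)$ at $p_i$ equals $L(p_i)(\mathbf{I}-Df|_{p_i})$ (in the affine coordinates $(x,y)$ of $[1:x:y]$), and $$\sum_{i=1}^4\frac{1}{L(p_i)^2d_i}=0,\quad \sum_{i=1}^4\frac{x(p_i)}{L(p_i)^2d_i}=0,\quad \sum_{i=1}^4\frac{y(p_i)}{L(p_i)^2d_i}=0,\quad \sum_{i=1}^4\frac{t_i}{L(p_i)d_i}=0,\quad \sum_{i=1}^4\frac{1}{L(p_i)d_i}=0.$$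
   Context: A holomorphic quadratic self-map of $\mathbb{P}^2$ is given by three quadratic homogeneous polynomials without common nontrivial zeros; a fixed point $p$ is non-degenerate if $\det(\mathbf{I}-Df|_p)\ne0$. In the affine chart $z_1\ne0$ with coordinates $[1:x:y]$, $f(x,y)=(x-P/L,\,y-Q/L)$. *)

(* Defs.v *)
From HB Require Import structures.
From mathcomp Require Import all_boot all_order all_algebra.
Set Implicit Arguments. Unset Strict Implicit. Unset Printing Implicit Defensive.
Import GRing.Theory Num.Theory.
Local Open Scope ring_scope.

(* Bivariate polynomials in the affine coordinates (x,y) of the chart [1:x:y]:
   p : {poly {poly R}}, the inner variable is x, the outer variable is y. *)
Definition PX {R : nzRingType} : {poly {poly R}} := ('X)%:P.
Definition PY {R : nzRingType} : {poly {poly R}} := 'X.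

Definition ev2 {R : comNzRingType} (p : {poly {poly R}}) (x y : R) : R :=
  p.[y%:P].[x].

Definition dX {R : nzRingType} (p : {poly {poly R}}) : {poly {poly R}} :=
  map_poly (@deriv R) p.
Definition dY {R : nzRingType} (p : {poly {poly R}}) : {poly {poly R}} :=
  deriv p.
Definition dXY {R : nzRingType} (j : 'I_2) (p : {poly {poly R}}) :=
  if val j == 0%N then dX p else dY p.

(* Homogeneous coordinates z = [z1:z2:z3] are row vectors 'rV_3 (indices 0,1,2). *)
Definition linform {R : nzRingType} (l : 'rV[R]_3) (z : 'rV[R]_3) : R :=
  \sum_(i < 3) l 0 i * z 0 i.
Definition quadform {R : nzRingType} (A : 'M[R]_3) (z : 'rV[R]_3) : R :=
  \sum_(i < 3) \sum_(j < 3) A i j * z 0 i * z 0 j.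

Definition chartvar {R : nzRingType} (i : 'I_3) : {poly {poly R}} :=
  match val i with 0%N => 1 | 1%N => PX | _ => PY end.
Definition dehom_lin {R : nzRingType} (l : 'rV[R]_3) : {poly {poly R}} :=
  \sum_(i < 3) (l 0 i)%:P%:P * chartvar i.
Definition dehom_quad {R : nzRingType} (A : 'M[R]_3) : {poly {poly R}} :=
  \sum_(i < 3) \sum_(j < 3) (A i j)%:P%:P * chartvar i * chartvar j.

Definition qmap {R : nzRingType} (l : 'rV[R]_3) (A B : 'M[R]_3) (z : 'rV[R]_3)
  : 'rV[R]_3 :=
  \row_(k < 3) (z 0 k * linform l z -
     match val k with 0%N => 0 | 1%N => quadform A z | _ => quadform B z end).

Definition holomorphic {R : nzRingType} (l : 'rV[R]_3) (A B : 'M[R]_3) : Prop :=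
  forall z : 'rV[R]_3, qmap l A B z = 0 -> z = 0.

Definition pt {R : nzRingType} (x y : R) : 'rV[R]_3 :=
  \row_(k < 3) match val k with 0%N => 1 | 1%N => x | _ => y end.

(* [1:x:y] is a fixed point of f in P^2 (equality of points of P^2) *)
Definition fixed_pt {R : nzRingType} (l : 'rV[R]_3) (A B : 'M[R]_3) (x y : R)
  : Prop :=
  exists lam : R, lam != 0 /\ qmap l A B (pt x y) = lam *: pt x y.

(* Derivative Df at (x,y) of the affine expression of f in the chart z1 <> 0:
   f(x,y) = (x - P/L, y - Q/L) = (u/L, v/L) with u = xL - P, v = yL - Q;
   the derivative of a quotient of polynomials u/w is (w du - u dw)/w^2. *)
Definition Df {R : fieldType} (l : 'rV[R]_3) (A B : 'M[R]_3) (x y : R)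
  : 'M[R]_2 :=
  let w := dehom_lin l in
  let u := PX * w - dehom_quad A in
  let v := PY * w - dehom_quad B in
  let c (i : 'I_2) := if val i == 0%N then u else v in
  \matrix_(i < 2, j < 2)
     ((ev2 w x y * ev2 (dXY j (c i)) x y - ev2 (c i) x y * ev2 (dXY j w) x y)
        / (ev2 w x y ^+ 2)).

Definition jacPQ {R : comNzRingType} (A B : 'M[R]_3) (x y : R) : 'M[R]_2 :=
  let c (i : 'I_2) := if val i == 0%N then dehom_quad A else dehom_quad B in
  \matrix_(i < 2, j < 2) ev2 (dXY j (c i)) x y.

(* Main.v *)
Require Import Defs.
From HB Require Import structures.
From mathcomp Require Import all_boot all_order all_algebra.
From mathcomp Require Import ring.
Import GRing.Theory Num.Theory.
Local Open Scope ring_scope.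

Notation i0 := (@ord0 2).
Notation i1 := (lift (@ord0 2) (@ord0 1)).
Notation i2 := (lift (@ord0 2) (lift (@ord0 1) (@ord0 0))).

Section Comp.
Context {R : comNzRingType}.
Implicit Types (A : 'M[R]_3) (l : 'rV[R]_3) (x y : R) (p q w : {poly {poly R}}).

Definition Pe A x y := A i0 i0 + A i0 i1 * x + A i0 i2 * y + A i1 i0 * x
  + A i1 i1 * x * x + A i1 i2 * x * y + A i2 i0 * y + A i2 i1 * y * x
  + A i2 i2 * y * y.
Definition Pxe A x y := A i0 i1 + A i1 i0 + (A i1 i1 + A i1 i1) * x
  + (A i1 i2 + A i2 i1) * y.
Definition Pye A x y := A i0 i2 + A i2 i0 + (A i1 i2 + A i2 i1) * x
  + (A i2 i2 + A i2 i2) * y.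
Definition Le l x y := l 0 i0 + l 0 i1 * x + l 0 i2 * y.

Lemma dX_ev p x y : ev2 (dX p) x y = (p.[y%:P])^`().[x].
Proof.
rewrite /ev2 /dX (@horner_coef_wide _ (size p) (map_poly (@deriv R) p)); last first.
  rewrite /map_poly; exact: size_poly.
rewrite [p.[_]](@horner_coef_wide _ (size p)) //.
rewrite raddf_sum /=; congr (_.[x]); apply: eq_bigr => i _.
rewrite coef_map /= -rmorphXn /=.
by rewrite derivM derivC mulr0 addr0.
Qed.

Section Struct.
Variables K0 K1 K2 : {poly R}.
Let p := K2%:P * 'X * 'X + K1%:P * 'X + K0%:P.
Lemma evS x y : ev2 p x y = K0.[x] + K1.[x] * y + K2.[x] * y * y.
Proof. rewrite /ev2 /p !hornerE /=; ring. Qed.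
Lemma evSY x y : ev2 (dY p) x y = K1.[x] + (K2.[x] + K2.[x]) * y.
Proof. rewrite /ev2 /dY /p !derivE !hornerE /=; ring. Qed.
Lemma evSX x y : ev2 (dX p) x y = K0^`().[x] + K1^`().[x] * y + K2^`().[x] * y * y.
Proof. rewrite dX_ev /p !hornerE !derivE !hornerE /=; ring. Qed.
End Struct.

Lemma cv0 : chartvar i0 = 1 :> {poly {poly R}}. Proof. by []. Qed.
Lemma cv1 : chartvar i1 = PX :> {poly {poly R}}. Proof. by []. Qed.
Lemma cv2 : chartvar i2 = PY :> {poly {poly R}}. Proof. by []. Qed.

Definition k0 A : {poly R} := (A i0 i0)%:P + (A i0 i1 + A i1 i0)%:P * 'X + (A i1 i1)%:P * 'X * 'X.
Definition k1 A : {poly R} := (A i0 i2 + A i2 i0)%:P + (A i1 i2 + A i2 i1)%:P * 'X.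
Definition k2 A : {poly R} := (A i2 i2)%:P.
Lemma quad_exp A : dehom_quad A = (k2 A)%:P * 'X * 'X + (k1 A)%:P * 'X + (k0 A)%:P.
Proof.
rewrite /dehom_quad !big_ord_recl !big_ord0 !addr0 !cv0 !cv1 !cv2.
rewrite /k0 /k1 /k2 /PX /PY !rmorphD !rmorphM /= !rmorphD /=.
ring.
Qed.
Lemma lin_exp l : dehom_lin l = 0%:P * 'X * 'X + (l 0 i2)%:P%:P * 'X
   + ((l 0 i0)%:P + (l 0 i1)%:P * 'X)%:P.
Proof.
rewrite /dehom_lin !big_ord_recl !big_ord0 !addr0 !cv0 !cv1 !cv2.
rewrite /PX /PY !rmorphD !rmorphM /=. ring.
Qed.

Lemma ev_quad A x y : ev2 (dehom_quad A) x y = Pe A x y.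
Proof. rewrite quad_exp evS /k0 /k1 /k2 !hornerE /Pe /=; ring. Qed.
Lemma ev_quadX A x y : ev2 (dX (dehom_quad A)) x y = Pxe A x y.
Proof. rewrite quad_exp evSX /k0 /k1 /k2 !derivE !hornerE /Pxe /=; ring. Qed.
Lemma ev_quadY A x y : ev2 (dY (dehom_quad A)) x y = Pye A x y.
Proof. rewrite quad_exp evSY /k0 /k1 /k2 !hornerE /Pye /=; ring. Qed.
Lemma ev_lin l x y : ev2 (dehom_lin l) x y = Le l x y.
Proof. rewrite lin_exp evS !hornerE /Le /=; ring. Qed.
Lemma ev_linX l x y : ev2 (dX (dehom_lin l)) x y = l 0 i1.
Proof. rewrite lin_exp evSX !derivE !hornerE /=; ring. Qed.
Lemma ev_linY l x y : ev2 (dY (dehom_lin l)) x y = l 0 i2.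
Proof. rewrite lin_exp evSY !hornerE /=; ring. Qed.

Lemma ev_u w q x y : ev2 (PX * w - q) x y = x * ev2 w x y - ev2 q x y.
Proof. by rewrite /ev2 /PX !hornerE. Qed.
Lemma ev_v w q x y : ev2 (PY * w - q) x y = y * ev2 w x y - ev2 q x y.
Proof. by rewrite /ev2 /PY !hornerE. Qed.
Lemma ev_uX w q x y : ev2 (dX (PX * w - q)) x y =
  ev2 w x y + x * ev2 (dX w) x y - ev2 (dX q) x y.
Proof. rewrite !dX_ev /PX !hornerE !derivE !hornerE /ev2 /=; ring. Qed.
Lemma ev_uY w q x y : ev2 (dY (PX * w - q)) x y = x * ev2 (dY w) x y - ev2 (dY q) x y.
Proof. rewrite /dY /ev2 /PX !derivE !hornerE /=; ring. Qed.
Lemma ev_vX w q x y : ev2 (dX (PY * w - q)) x y = y * ev2 (dX w) x y - ev2 (dX q) x y.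
Proof. rewrite !dX_ev /PY !hornerE !derivE !hornerE /ev2 /=; ring. Qed.
Lemma ev_vY w q x y : ev2 (dY (PY * w - q)) x y =
  ev2 w x y + y * ev2 (dY w) x y - ev2 (dY q) x y.
Proof. rewrite /dY /ev2 /PY !derivE !hornerE /=; ring. Qed.

End Comp.

Section Core.
Context {R : numFieldType}.

Definition aff (u0 u1 u2 x y : R) := u0 + u1 * x + u2 * y.
Definition Dt (xa ya xb yb xc yc : R) := (xb - xa) * (yc - ya) - (yb - ya) * (xc - xa).

Section Abs.
Variables a0 a1 a2 b0 b1 b2 c0 c1 c2 d0 d1 d2 : R.
Definition Jab x y := aff a0 a1 a2 x y * aff d0 d1 d2 x y - aff b0 b1 b2 x y * aff c0 c1 c2 x y.
Definition Jsab xi yi xj yj :=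
  (aff a0 a1 a2 xi yi + aff a0 a1 a2 xj yj) * (aff d0 d1 d2 xi yi + aff d0 d1 d2 xj yj)
  - (aff b0 b1 b2 xi yi + aff b0 b1 b2 xj yj) * (aff c0 c1 c2 xi yi + aff c0 c1 c2 xj yj).

Lemma cert x1 y1 x2 y2 x3 y3 x4 y4 :
  4 * (Jab x1 y1 * Dt x2 y2 x3 y3 x4 y4 + Jab x2 y2 * Dt x1 y1 x3 y3 x4 y4) =
  (- (2) * x4*y3 + x4*y2 + x4*y1 + (2) * x3*y4 - x3*y2 - x3*y1 - x2*y4 + x2*y3 - x1*y4 + x1*y3) * Jsab x1 y1 x2 y2
  + (x4*y2 - x4*y1 - x2*y4 + x2*y1 + x1*y4 - x1*y2) * Jsab x1 y1 x3 y3
  + (- x3*y2 + x3*y1 + x2*y3 - x2*y1 - x1*y3 + x1*y2) * Jsab x1 y1 x4 y4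
  + (- x4*y2 + x4*y1 + x2*y4 - x2*y1 - x1*y4 + x1*y2) * Jsab x2 y2 x3 y3
  + (x3*y2 - x3*y1 - x2*y3 + x2*y1 + x1*y3 - x1*y2) * Jsab x2 y2 x4 y4.
Proof. rewrite /Jsab /Jab /aff /Dt; ring. Qed.
End Abs.
End Core.

Section Core2.
Context {R : numFieldType}.
Implicit Types (A B : 'M[R]_3).

Definition JA A B x y := Pxe A x y * Pye B x y - Pye A x y * Pxe B x y.
Definition JsA A B xi yi xj yj :=
  (Pxe A xi yi + Pxe A xj yj) * (Pye B xi yi + Pye B xj yj)
  - (Pye A xi yi + Pye A xj yj) * (Pxe B xi yi + Pxe B xj yj).

Lemma two_pts (u v : R) : u * v = 0 -> u = 0 \/ v = 0.
Proof. by move/eqP; rewrite mulf_eq0 => /orP[] /eqP; [left|right]. Qed.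

Lemma vec0 (J dx dy : R) : J * dx = 0 -> J * dy = 0 -> ~ (dx = 0 /\ dy = 0) -> J = 0.
Proof.
move=> /two_pts [->//|hx] /two_pts [->//|hy] []; by split.
Qed.

Lemma sub_ne (a b c d : R) : ~ (a = b /\ c = d) -> ~ (b - a = 0 /\ d - c = 0).
Proof.
move=> h [/eqP h1 /eqP h2]; apply: h; split; apply/eqP; by rewrite eq_sym -subr_eq0.
Qed.

Lemma mid A B xi yi xj yj :
  Pe A xi yi = 0 -> Pe A xj yj = 0 -> Pe B xi yi = 0 -> Pe B xj yj = 0 ->
  ~ (xi = xj /\ yi = yj) -> JsA A B xi yi xj yj = 0.
Proof.
move=> hAi hAj hBi hBj hne.
have hP : (Pxe A xi yi + Pxe A xj yj) * (xj - xi) + (Pye A xi yi + Pye A xj yj) * (yj - yi) = 0.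
  have -> : (Pxe A xi yi + Pxe A xj yj) * (xj - xi) + (Pye A xi yi + Pye A xj yj) * (yj - yi)
     = 2 * (Pe A xj yj - Pe A xi yi) by rewrite /Pxe /Pye /Pe; ring.
  by rewrite hAi hAj subrr mulr0.
have hQ : (Pxe B xi yi + Pxe B xj yj) * (xj - xi) + (Pye B xi yi + Pye B xj yj) * (yj - yi) = 0.
  have -> : (Pxe B xi yi + Pxe B xj yj) * (xj - xi) + (Pye B xi yi + Pye B xj yj) * (yj - yi)
     = 2 * (Pe B xj yj - Pe B xi yi) by rewrite /Pxe /Pye /Pe; ring.
  by rewrite hBi hBj subrr mulr0.
apply: (@vec0 _ (xj - xi) (yj - yi)).
- have -> : JsA A B xi yi xj yj * (xj - xi) =
     (Pye B xi yi + Pye B xj yj) * ((Pxe A xi yi + Pxe A xj yj) * (xj - xi) + (Pye A xi yi + Pye A xj yj) * (yj - yi))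
   - (Pye A xi yi + Pye A xj yj) * ((Pxe B xi yi + Pxe B xj yj) * (xj - xi) + (Pye B xi yi + Pye B xj yj) * (yj - yi))
   by rewrite /JsA; ring.
  by rewrite hP hQ !mulr0 subrr.
- have -> : JsA A B xi yi xj yj * (yj - yi) =
     (Pxe A xi yi + Pxe A xj yj) * ((Pxe B xi yi + Pxe B xj yj) * (xj - xi) + (Pye B xi yi + Pye B xj yj) * (yj - yi))
   - (Pxe B xi yi + Pxe B xj yj) * ((Pxe A xi yi + Pxe A xj yj) * (xj - xi) + (Pye A xi yi + Pye A xj yj) * (yj - yi))
   by rewrite /JsA; ring.
  by rewrite hP hQ !mulr0 subrr.
- exact: sub_ne.
Qed.

Lemma nz4 (dx dy ex ey : R) : ~ (dx = 0 /\ dy = 0) -> ~ (ex = 0 /\ ey = 0) ->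
  ~ (ex = dx /\ ey = dy) -> dx * ey - dy * ex = 0 ->
  ex * (dx - ex) != 0 \/ ey * (dy - ey) != 0.
Proof.
move=> hd he hde hc.
case: (eqVneq (ex * (dx - ex)) 0) => [h1|]; last by left.
case: (eqVneq (ey * (dy - ey)) 0) => [h2|]; last by right.
exfalso.
case/two_pts: h1 => [h1|/eqP]; last (rewrite subr_eq0 => /eqP h1);
case/two_pts: h2 => [h2|/eqP]; try (rewrite subr_eq0 => /eqP h2); subst.
all: try by [apply: he; split | apply: hde; split].
all: move: hc; rewrite ?(mulr0, mul0r, subr0, sub0r) => /eqP; rewrite ?oppr_eq0 mulf_eq0 => /orP[]/eqP hh; subst;
  by [apply: he; split | apply: hde; split | apply: hd; split].
Qed.


Lemma coll A B xp yp xq yq xr yr :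
  Pe A xp yp = 0 -> Pe A xq yq = 0 -> Pe A xr yr = 0 ->
  Pe B xp yp = 0 -> Pe B xq yq = 0 -> Pe B xr yr = 0 ->
  ~ (xp = xq /\ yp = yq) -> ~ (xp = xr /\ yp = yr) -> ~ (xq = xr /\ yq = yr) ->
  Dt xp yp xq yq xr yr = 0 -> JA A B xp yp = 0.
Proof.
move=> hAp hAq hAr hBp hBq hBr npq npr nqr hc.
have hd : ~ (xq - xp = 0 /\ yq - yp = 0).
  exact: sub_ne.
have he : ~ (xr - xp = 0 /\ yr - yp = 0).
  exact: sub_ne.
have hde : ~ (xr - xp = xq - xp /\ yr - yp = yq - yp).
  move=> [h1 h2]; apply: nqr; split.
    by apply: (addIr (-xp)); rewrite h1.
  by apply: (addIr (-yp)); rewrite h2.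
have hc' : (xq - xp) * (yr - yp) - (yq - yp) * (xr - xp) = 0 by [].
have key : forall C : 'M[R]_3, Pe C xp yp = 0 -> Pe C xq yq = 0 -> Pe C xr yr = 0 ->
   Pxe C xp yp * (xq - xp) + Pye C xp yp * (yq - yp) = 0.
  move=> C hp hq hr.
  have ex : (xr - xp) * ((xq - xp) - (xr - xp)) * (Pxe C xp yp * (xq - xp) + Pye C xp yp * (yq - yp))
    = (xq - xp) ^+ 2 * (Pe C xr yr - Pe C xp yp) - (xr - xp) ^+ 2 * (Pe C xq yq - Pe C xp yp)
      - Dt xp yp xq yq xr yr * ((xq - xp) * Pye C xp yp + (C i1 i2 + C i2 i1) * (xr - xp) * (xq - xp)
          + C i2 i2 * (2 * (xr - xp) * (yq - yp) + Dt xp yp xq yq xr yr)).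
    rewrite /Pxe /Pye /Pe /Dt; ring.
  have ey : (yr - yp) * ((yq - yp) - (yr - yp)) * (Pxe C xp yp * (xq - xp) + Pye C xp yp * (yq - yp))
    = (yq - yp) ^+ 2 * (Pe C xr yr - Pe C xp yp) - (yr - yp) ^+ 2 * (Pe C xq yq - Pe C xp yp)
      + Dt xp yp xq yq xr yr * ((yq - yp) * Pxe C xp yp + (C i1 i2 + C i2 i1) * (yr - yp) * (yq - yp)
          + C i1 i1 * (2 * (yr - yp) * (xq - xp) - Dt xp yp xq yq xr yr)).
    rewrite /Pxe /Pye /Pe /Dt; ring.
  rewrite hp hq hr hc subrr !mulr0 subrr mul0r subr0 in ex.
  rewrite hp hq hr hc subrr !mulr0 subrr mul0r addr0 in ey.
  case: (nz4 _ _ _ _ hd he hde hc') => hnz.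
    by move/eqP: ex; rewrite mulf_eq0 (negbTE hnz) /= => /eqP.
  by move/eqP: ey; rewrite mulf_eq0 (negbTE hnz) /= => /eqP.
have gA := key A hAp hAq hAr.
have gB := key B hBp hBq hBr.
apply: (@vec0 _ (xq - xp) (yq - yp)) => //.
- have -> : JA A B xp yp * (xq - xp) =
     Pye B xp yp * (Pxe A xp yp * (xq - xp) + Pye A xp yp * (yq - yp))
   - Pye A xp yp * (Pxe B xp yp * (xq - xp) + Pye B xp yp * (yq - yp)) by rewrite /JA; ring.
  by rewrite gA gB !mulr0 subrr.
- have -> : JA A B xp yp * (yq - yp) =
     Pxe A xp yp * (Pxe B xp yp * (xq - xp) + Pye B xp yp * (yq - yp))
   - Pxe B xp yp * (Pxe A xp yp * (xq - xp) + Pye A xp yp * (yq - yp)) by rewrite /JA; ring.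
  by rewrite gA gB !mulr0 subrr.
Qed.

End Core2.

Section Core3.
Context {R : numFieldType}.
Implicit Types (A B : 'M[R]_3).

Lemma cert_JA A B x1 y1 x2 y2 x3 y3 x4 y4 :
  4 * (JA A B x1 y1 * Dt x2 y2 x3 y3 x4 y4 + JA A B x2 y2 * Dt x1 y1 x3 y3 x4 y4) =
  (- (2) * x4*y3 + x4*y2 + x4*y1 + (2) * x3*y4 - x3*y2 - x3*y1 - x2*y4 + x2*y3 - x1*y4 + x1*y3) * JsA A B x1 y1 x2 y2
  + (x4*y2 - x4*y1 - x2*y4 + x2*y1 + x1*y4 - x1*y2) * JsA A B x1 y1 x3 y3
  + (- x3*y2 + x3*y1 + x2*y3 - x2*y1 - x1*y3 + x1*y2) * JsA A B x1 y1 x4 y4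
  + (- x4*y2 + x4*y1 + x2*y4 - x2*y1 - x1*y4 + x1*y2) * JsA A B x2 y2 x3 y3
  + (x3*y2 - x3*y1 - x2*y3 + x2*y1 + x1*y3 - x1*y2) * JsA A B x2 y2 x4 y4.
Proof. exact: cert. Qed.

Lemma rel A B x1 y1 x2 y2 x3 y3 x4 y4 :
  JsA A B x1 y1 x2 y2 = 0 -> JsA A B x1 y1 x3 y3 = 0 -> JsA A B x1 y1 x4 y4 = 0 ->
  JsA A B x2 y2 x3 y3 = 0 -> JsA A B x2 y2 x4 y4 = 0 ->
  JA A B x1 y1 * Dt x2 y2 x3 y3 x4 y4 + JA A B x2 y2 * Dt x1 y1 x3 y3 x4 y4 = 0.
Proof.
move=> h12 h13 h14 h23 h24.
have := cert_JA A B x1 y1 x2 y2 x3 y3 x4 y4.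
rewrite h12 h13 h14 h23 h24 !mulr0 !addr0 => /eqP.
by rewrite mulf_eq0 pnatr_eq0 /= => /eqP.
Qed.

Lemma lin0 (a b : R) : a + b = 0 -> b = - a.
Proof. by move=> h; apply/eqP; rewrite -addr_eq0 addrC h. Qed.

Lemma inv_from (j d k : R) : j != 0 -> k != 0 -> j * d = k -> j^-1 = d / k.
Proof.
move=> hj hk e.
have hd : d != 0 by apply: contraNneq hk => hd0; rewrite -e hd0 mulr0.
by rewrite -e; field; apply/andP; split.
Qed.

Lemma EJ A B x1 y1 x2 y2 x3 y3 x4 y4 (e0 e1 e2 : R) :
  Pe A x1 y1 = 0 -> Pe A x2 y2 = 0 -> Pe A x3 y3 = 0 -> Pe A x4 y4 = 0 ->
  Pe B x1 y1 = 0 -> Pe B x2 y2 = 0 -> Pe B x3 y3 = 0 -> Pe B x4 y4 = 0 ->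
  ~ (x1 = x2 /\ y1 = y2) -> ~ (x1 = x3 /\ y1 = y3) -> ~ (x1 = x4 /\ y1 = y4) ->
  ~ (x2 = x3 /\ y2 = y3) -> ~ (x2 = x4 /\ y2 = y4) -> ~ (x3 = x4 /\ y3 = y4) ->
  JA A B x1 y1 != 0 -> JA A B x2 y2 != 0 -> JA A B x3 y3 != 0 -> JA A B x4 y4 != 0 ->
  (e0 + e1 * x1 + e2 * y1) / JA A B x1 y1 + (e0 + e1 * x2 + e2 * y2) / JA A B x2 y2
  + (e0 + e1 * x3 + e2 * y3) / JA A B x3 y3 + (e0 + e1 * x4 + e2 * y4) / JA A B x4 y4 = 0.
Proof.
move=> a1 a2 a3 a4 b1 b2 b3 b4 n12 n13 n14 n23 n24 n34 j1 j2 j3 j4.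
have sym : forall xi yi xj yj : R, ~ (xi = xj /\ yi = yj) -> ~ (xj = xi /\ yj = yi).
  by move=> ? ? ? ? h [h1 h2]; apply: h; rewrite h1 h2.
have m12 := mid A B _ _ _ _ a1 a2 b1 b2 n12.
have m13 := mid A B _ _ _ _ a1 a3 b1 b3 n13.
have m14 := mid A B _ _ _ _ a1 a4 b1 b4 n14.
have m23 := mid A B _ _ _ _ a2 a3 b2 b3 n23.
have m24 := mid A B _ _ _ _ a2 a4 b2 b4 n24.
have m34 := mid A B _ _ _ _ a3 a4 b3 b4 n34.
have m21 := mid A B _ _ _ _ a2 a1 b2 b1 (sym _ _ _ _ n12).
have m31 := mid A B _ _ _ _ a3 a1 b3 b1 (sym _ _ _ _ n13).
have m41 := mid A B _ _ _ _ a4 a1 b4 b1 (sym _ _ _ _ n14).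
have m32 := mid A B _ _ _ _ a3 a2 b3 b2 (sym _ _ _ _ n23).
have m42 := mid A B _ _ _ _ a4 a2 b4 b2 (sym _ _ _ _ n24).
have r1 := rel _ _ _ _ _ _ _ _ _ _ m12 m13 m14 m23 m24.
have r2 := rel _ _ _ _ _ _ _ _ _ _ m23 m21 m24 m31 m34.
have r3 := rel _ _ _ _ _ _ _ _ _ _ m34 m31 m32 m41 m42.
set J1 := JA A B x1 y1 in r1 j1 *; set J2 := JA A B x2 y2 in r1 r2 j2 *.
set J3 := JA A B x3 y3 in r2 r3 j3 *; set J4 := JA A B x4 y4 in r3 j4 *.
set K := J1 * Dt x2 y2 x3 y3 x4 y4.
have hK : K != 0.
  apply/negP => /eqP hK0.
  have hD : Dt x2 y2 x3 y3 x4 y4 = 0.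
    by move/eqP: hK0; rewrite mulf_eq0 (negbTE j1) /= => /eqP.
  by move/eqP: j2; apply; apply: (coll _ _ _ _ _ _ _ _ a2 a3 a4 b2 b3 b4 n23 n24 n34 hD).
have E1 : J1^-1 = Dt x2 y2 x3 y3 x4 y4 / K by apply: inv_from.
have E2 : J2^-1 = Dt x1 y1 x3 y3 x4 y4 / (- K).
  apply: inv_from => //; first by rewrite oppr_eq0.
  exact: lin0 _ _ r1.
have E3 : J3^-1 = Dt x1 y1 x2 y2 x4 y4 / K.
  apply: inv_from => //.
  have e : J3 * Dt x1 y1 x2 y2 x4 y4 - K =
    - ((K + J2 * Dt x1 y1 x3 y3 x4 y4) + (J2 * Dt x3 y3 x1 y1 x4 y4 + J3 * Dt x2 y2 x1 y1 x4 y4))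
    by rewrite /Dt; ring.
  by move: e; rewrite r1 r2 addr0 oppr0 => /eqP; rewrite subr_eq0 => /eqP.
have E4 : J4^-1 = Dt x1 y1 x2 y2 x3 y3 / (- K).
  apply: inv_from => //; first by rewrite oppr_eq0.
  have e : J4 * Dt x1 y1 x2 y2 x3 y3 - (- K) =
    (K + J2 * Dt x1 y1 x3 y3 x4 y4) + (J2 * Dt x3 y3 x1 y1 x4 y4 + J3 * Dt x2 y2 x1 y1 x4 y4)
    + (J3 * Dt x4 y4 x1 y1 x2 y2 + J4 * Dt x3 y3 x1 y1 x2 y2)
    by rewrite /Dt; ring.
  by move: e; rewrite r1 r2 r3 !addr0 => /eqP; rewrite subr_eq0 => /eqP.
rewrite E1 E2 E3 E4 /Dt.
field.
exact: hK.
Qed.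

End Core3.

Lemma det2 (R : comNzRingType) (M : 'M[R]_2) :
  \det M = M ord0 ord0 * M (lift ord0 ord0) (lift ord0 ord0) - M ord0 (lift ord0 ord0) * M (lift ord0 ord0) ord0.
Proof.
rewrite (expand_det_row _ ord0) !big_ord_recl big_ord0 /cofactor !det_mx11 !mxE /=.
rewrite (_ : lift ord0 0 = lift ord0 ord0 :> 'I_2); last by apply: val_inj.
rewrite (_ : lift (lift ord0 ord0) 0 = ord0 :> 'I_2); last by apply: val_inj.
rewrite /bump /= expr0 expr1; ring.
Qed.
Lemma tr2 (R : comNzRingType) (M : 'M[R]_2) :
  \tr M = M ord0 ord0 + M (lift ord0 ord0) (lift ord0 ord0).
Proof. by rewrite /mxtrace !big_ord_recl big_ord0 addr0. Qed.

Section Main.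
Context {R : numFieldType}.
Implicit Types (A B : 'M[R]_3) (l : 'rV[R]_3) (x y : R).

Lemma lin_pt l x y : linform l (pt x y) = Le l x y.
Proof. rewrite /linform !big_ord_recl big_ord0 !mxE /Le /=; ring. Qed.
Lemma quad_pt A x y : quadform A (pt x y) = Pe A x y.
Proof. rewrite /quadform !big_ord_recl !big_ord0 !mxE /Pe /=; ring. Qed.

Lemma canc_aux (a b c : R) : a - b = c -> a = c -> b = 0.
Proof.
move=> h1 h2; have e : b = a - (a - b) by ring.
by rewrite e h1 h2 subrr.
Qed.

Lemma fixed_char l A B x y : fixed_pt l A B x y ->
  [/\ Pe A x y = 0, Pe B x y = 0 & Le l x y != 0].
Proof.
case=> lam [hl hq].
have h0 : qmap l A B (pt x y) 0 i0 = (lam *: pt x y) 0 i0 by rewrite hq.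
have h1 : qmap l A B (pt x y) 0 i1 = (lam *: pt x y) 0 i1 by rewrite hq.
have h2 : qmap l A B (pt x y) 0 i2 = (lam *: pt x y) 0 i2 by rewrite hq.
move: h0 h1 h2; rewrite /qmap !mxE /= lin_pt !quad_pt => h0 h1 h2.
have hL : Le l x y = lam by move: h0; rewrite mul1r subr0 mulr1.
rewrite hL in h1 h2.
split => //.
- by apply: (canc_aux _ _ _ h1); rewrite mulrC.
- by apply: (canc_aux _ _ _ h2); rewrite mulrC.
- by rewrite hL.
Qed.

Lemma jac_eq l A B x y : Pe A x y = 0 -> Pe B x y = 0 -> Le l x y != 0 ->
  jacPQ A B x y = ev2 (dehom_lin l) x y *: (1 - Df l A B x y).
Proof.
move=> hA hB hL.
apply/matrixP => i j; rewrite !mxE.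
case: i => [[|[|//]] Hi]; case: j => [[|[|//]] Hj]; rewrite /dXY /=;
rewrite ?ev_u ?ev_v ?ev_uX ?ev_uY ?ev_vX ?ev_vY ?ev_quad ?ev_quadX ?ev_quadY ?ev_lin ?ev_linX ?ev_linY ?hA ?hB;
 field; exact: hL.
Qed.

Lemma JA_det A B x y : JA A B x y = \det (jacPQ A B x y).
Proof. by rewrite det2 !mxE /dXY /= !ev_quadX !ev_quadY. Qed.
Lemma tr_jac A B x y : Pxe A x y + Pye B x y = \tr (jacPQ A B x y).
Proof. by rewrite tr2 !mxE /dXY /= !ev_quadX !ev_quadY. Qed.

End Main.

Notation o0 := (@ord0 3).
Notation o1 := (lift (@ord0 3) (@ord0 2)).
Notation o2 := (lift (@ord0 3) (lift (@ord0 2) (@ord0 1))).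
Notation o3 := (lift (@ord0 3) (lift (@ord0 2) (lift (@ord0 1) (@ord0 0)))).

Theorem mainTheorem6 (R : numClosedFieldType) (l : 'rV[R]_3) (A B : 'M[R]_3)
    (p : 'I_4 -> R * R) :
  holomorphic l A B ->
  injective p ->
  (forall x y : R, fixed_pt l A B x y <-> exists i, p i = (x, y)) ->
  (forall i, \det (1 - Df l A B (p i).1 (p i).2) != 0) ->
  let Lp i := ev2 (dehom_lin l) (p i).1 (p i).2 in
  let M i := 1 - Df l A B (p i).1 (p i).2 in
  let t i := \tr (M i) in
  let d i := \det (M i) in
  (forall i, [/\ ev2 (dehom_quad A) (p i).1 (p i).2 = 0,
                 ev2 (dehom_quad B) (p i).1 (p i).2 = 0,
                 Lp i != 0 &
                 jacPQ A B (p i).1 (p i).2 = Lp i *: M i]) /\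
  [/\ \sum_(i < 4) (Lp i ^+ 2 * d i)^-1 = 0,
      \sum_(i < 4) (p i).1 / (Lp i ^+ 2 * d i) = 0,
      \sum_(i < 4) (p i).2 / (Lp i ^+ 2 * d i) = 0,
      \sum_(i < 4) t i / (Lp i * d i) = 0 &
      \sum_(i < 4) (Lp i * d i)^-1 = 0].
Proof.
move=> _ inj hfix hdet Lp M t d.
have F : forall i, [/\ Pe A (p i).1 (p i).2 = 0, Pe B (p i).1 (p i).2 = 0
                     & Le l (p i).1 (p i).2 != 0].
  by move=> i; apply: fixed_char; apply/hfix; exists i; case: (p i).
have HL : forall i, Lp i = Le l (p i).1 (p i).2 by move=> i; rewrite /Lp ev_lin.
have HJ : forall i, jacPQ A B (p i).1 (p i).2 = Lp i *: M i.
  by move=> i; case: (F i) => *; exact: jac_eq.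
have Jdet : forall i, JA A B (p i).1 (p i).2 = Lp i ^+ 2 * d i.
  by move=> i; rewrite JA_det HJ detZ.
have Jtr : forall i, Pxe A (p i).1 (p i).2 + Pye B (p i).1 (p i).2 = Lp i * t i.
  by move=> i; rewrite tr_jac HJ mxtraceZ.
have dnz : forall i, d i != 0 := hdet.
have Lnz : forall i, Lp i != 0 by move=> i; rewrite HL; case: (F i).
have Jnz : forall i, JA A B (p i).1 (p i).2 != 0.
  by move=> i; rewrite Jdet mulf_neq0 ?expf_neq0 ?Lnz ?hdet.
have dist : forall i j : 'I_4, i != j -> ~ ((p i).1 = (p j).1 /\ (p i).2 = (p j).2).
  move=> i j hij [h1 h2]; move/eqP: hij; apply; apply: inj.
  by rewrite [p i]surjective_pairing [p j]surjective_pairing h1 h2.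
have hsum : forall e0 e1 e2 : R, \sum_(i < 4) (e0 + e1 * (p i).1 + e2 * (p i).2)
               / JA A B (p i).1 (p i).2 = 0.
  move=> e0 e1 e2; rewrite !big_ord_recl big_ord0 addr0 !addrA.
  case: (F ord0) => a1 b1 _.
  case: (F (lift ord0 ord0)) => a2 b2 _.
  case: (F (lift ord0 (lift ord0 ord0))) => a3 b3 _.
  case: (F (lift ord0 (lift ord0 (lift ord0 ord0)))) => a4 b4 _.
  have o := (EJ A B _ _ _ _ _ _ _ _ e0 e1 e2 a1 a2 a3 a4 b1 b2 b3 b4
    (dist o0 o1 isT) (dist o0 o2 isT) (dist o0 o3 isT) (dist o1 o2 isT) (dist o1 o3 isT) (dist o2 o3 isT)
    (Jnz _) (Jnz _) (Jnz _) (Jnz _)).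
  exact: o.
split.
  move=> i; case: (F i) => ha hb hl.
  by split; rewrite ?ev_quad // HL.
split.
- rewrite -[RHS](hsum 1 0 0); apply: eq_bigr => i _; rewrite Jdet; field.
  by do ?split; rewrite ?Lnz ?dnz ?mulf_neq0 ?expf_neq0 ?Lnz ?dnz.
- rewrite -[RHS](hsum 0 1 0); apply: eq_bigr => i _; rewrite Jdet; field.
  by do ?split; rewrite ?Lnz ?dnz ?mulf_neq0 ?expf_neq0 ?Lnz ?dnz.
- rewrite -[RHS](hsum 0 0 1); apply: eq_bigr => i _; rewrite Jdet; field.
  by do ?split; rewrite ?Lnz ?dnz ?mulf_neq0 ?expf_neq0 ?Lnz ?dnz.
- rewrite -[RHS](hsum (A i0 i1 + A i1 i0 + (B i0 i2 + B i2 i0))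
                 (A i1 i1 + A i1 i1 + (B i1 i2 + B i2 i1))
                 (A i1 i2 + A i2 i1 + (B i2 i2 + B i2 i2))).
  apply: eq_bigr => i _.
  rewrite (_ : _ + _ * (p i).1 + _ * (p i).2 = Pxe A (p i).1 (p i).2 + Pye B (p i).1 (p i).2);
    last by rewrite /Pxe /Pye; ring.
  rewrite Jtr Jdet; field.
  by do ?split; rewrite ?Lnz ?dnz ?mulf_neq0 ?expf_neq0 ?Lnz ?dnz.
- rewrite -[RHS](hsum (l 0 i0) (l 0 i1) (l 0 i2)).
  apply: eq_bigr => i _.
  rewrite (_ : _ + _ * (p i).1 + _ * (p i).2 = Le l (p i).1 (p i).2) // -HL Jdet; field.
  by do ?split; rewrite ?Lnz ?dnz ?mulf_neq0 ?expf_neq0 ?Lnz ?dnz.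
Qed.
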